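(* Let $R$ be a relation with $n$ tuples, and let $\mathcal{R}$ be the output of the following recursive procedure $\textsc{Partition}(R,\mathcal{S})$ run with $\mathcal{S}=\mathcal{P}(\mathrm{vars}(R))$ ordered by increasing cardinality: if $\mathcal{S}=\emptyset$, return $\{R\}$; otherwise let $U$ be the first set in $\mathcal{S}$, for each $i\in\{1,\dots,\lceil\log n\rceil\}$ let $R^i$ be the set of tuples $t\in R$ such that $\deg_R(U=\pi_U t)\in[2^{i-1},2^i]$, and return $\bigcup_i \textsc{Partition}(R^i,\mathcal{S}\setminus\{U\})$. Then (1) $|\mathcal{R}|\le \log^{|\mathcal{P}(\mathrm{vars}(R))|} n$; (2) every instance $T\in\mathcal{R}$ satisfies a constraint set $\sigma_T$ with $\sigma_T(\emptyset)=n$ and $\sigma_T(\mathrm{vars}(R))=1$.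
   Context: For a relation $R$ and $X,Y\subseteq\mathrm{vars}(R)$ and a tuple $\mathbf{y}$ over $Y$, $\deg_R(X\mid Y=\mathbf{y})=|\pi_X(\sigma_{Y=\mathbf{y}}R)|$ and $\deg_R(X\mid Y)=\max_{\mathbf{y}}\deg_R(X\mid Y=\mathbf{y})$; the shorthand $\deg_R(U=u)$ means $\deg_R(\mathrm{vars}(R)\mid U=u)$, the number of tuples of $R$ with $U$-value $u$. In each recursive call degrees are computed in the current (sub)relation. A constraint set for $R$ is a function $\sigma:\mathcal{P}(\mathrm{vars}(R))\to\mathbb{R}_{\ge0}$, and $R$ satisfies $\sigma$ if $\deg_R(Y\mid X)\le 2\sigma(X)/\sigma(Y)$ for all $X\subseteq Y\subseteq\mathrm{vars}(R)$. Empty parts are discarded. *)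

(* Defs.v *)
From HB Require Import structures.
From mathcomp Require Import all_boot all_order all_algebra.
Set Implicit Arguments. Unset Strict Implicit. Unset Printing Implicit Defensive.
Import Order.TTheory GRing.Theory Num.Theory.

(* A relation over the finite variable set V (= vars(R)) with values in D:
   a finite set of tuples t : V -> D. *)
Section Rel.
Variables (V D : finType).

Definition tup := {ffun V -> D}.

Definition proj (X : {set V}) (t : tup) : {ffun V -> option D} :=
  [ffun v => if v \in X then Some (t v) else None].

Definition deg_at (R : {set tup}) (X Y : {set V}) (s : tup) : nat :=
  #|[set proj X t | t in [set t in R | proj Y t == proj Y s]]|.

(* deg_R(X | Y) = max over Y-values y (values not occurring give 0). *)
Definition deg (R : {set tup}) (X Y : {set V}) : nat :=
  \max_(s in R) deg_at R X Y s.

Definition degU (R : {set tup}) (U : {set V}) (s : tup) : nat :=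
  deg_at R [set: V] U s.

Definition bucket (R : {set tup}) (U : {set V}) (i : nat) : {set tup} :=
  [set t in R | (2 ^ i.-1 <= degU R U t <= 2 ^ i)%N].

(* PARTITION(R, S); n is the number of tuples of the input relation,
   buckets i = 1 .. ceil(log2 n) (= up_log 2 n); empty parts discarded. *)
Fixpoint PARTITION (n : nat) (R : {set tup}) (S : seq {set V})
  : seq {set tup} :=
  match S with
  | [::] => [:: R]
  | U :: S' =>
      flatten [seq PARTITION n (bucket R U i) S'
              | i <- iota 1 (up_log 2 n) & bucket R U i != set0]
  end.

Definition satisfies (F : realFieldType) (R : {set tup})
  (sigma : {set V} -> F) : Prop :=
  forall X Y : {set V}, X \subset Y ->
    ((deg R Y X)%:R <= 2 * sigma X / sigma Y)%R.

End Rel.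

(* Main.v *)
Require Import Defs.
From HB Require Import structures.
From mathcomp Require Import all_boot all_order all_algebra.
Import Order.TTheory GRing.Theory Num.Theory.
Set Implicit Arguments. Unset Strict Implicit. Unset Printing Implicit Defensive.

Section H.
Variables (V D : finType).
Implicit Types (R T : {set tup V D}) (X Y U : {set V}).

Definition cnt R U (s : tup V D) := #|[set x in R | proj U x == proj U s]|.

Lemma proj_sub X Y (t t' : tup V D) : X \subset Y -> proj Y t = proj Y t' -> proj X t = proj X t'.
Proof.
move=> sXY /ffunP E; apply/ffunP=> v; rewrite !ffunE.
case: ifP => // vX; have := E v; rewrite !ffunE (subsetP sXY _ vX) //.
Qed.

Lemma proj_inj : injective (@proj V D [set: V]).
Proof.
move=> t t' /ffunP E; apply/ffunP=> v; have := E v; rewrite !ffunE in_setT.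
by case.
Qed.

Lemma degU_cnt R U s : degU R U s = cnt R U s.
Proof. by rewrite /degU /deg_at card_imset //; apply: proj_inj. Qed.

Lemma cnt_eq R U s s' : proj U s = proj U s' -> cnt R U s = cnt R U s'.
Proof. by move=> E; rewrite /cnt E. Qed.

Lemma cnt_bucket R U i t : t \in bucket R U i -> cnt (bucket R U i) U t = cnt R U t.
Proof.
move=> tB; rewrite /cnt; apply: eq_card => x; rewrite !inE.
case E: (proj U x == proj U t); rewrite ?andbF ?andbT //.
rewrite andb_idr // => xR.
move: tB; rewrite !inE => /andP[_].
by rewrite !degU_cnt (cnt_eq _ (eqP E)).
Qed.

Lemma cnt_sub R R' U s : R \subset R' -> cnt R U s <= cnt R' U s.
Proof.
move=> sRR'; apply: subset_leq_card; apply/subsetP=> x; rewrite !inE.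
by case/andP=> /(subsetP sRR') -> ->.
Qed.

Lemma cnt_le R U s : cnt R U s <= #|R|.
Proof. by apply: subset_leq_card; apply/subsetP=> x; rewrite inE => /andP[]. Qed.

Lemma key X Y T (AX AY : {set tup V D}) L (s : tup V D) :
  X \subset Y -> T \subset AY -> AY \subset AX ->
  (forall t, t \in AY -> L <= cnt AY Y t) ->
  deg_at T Y X s * L <= cnt AX X s.
Proof.
move=> sXY sTY sYX HL.
set P := [set t in T | proj X t == proj X s].
set Q := [set t in AY | proj X t == proj X s].
apply: (@leq_trans #|Q|); last by rewrite /Q; apply: cnt_sub.
have sPQ : P \subset Q.
  by apply/subsetP=> x; rewrite !inE => /andP[/(subsetP sTY) -> ->].
rewrite -sum1_card (partition_big_imset (proj Y)) /=.
rewrite (big_setID (proj Y @: P)) /=.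
rewrite (setIidPr _); last by apply: imsetS.
apply: leq_trans (leq_addr _ _).
rewrite /deg_at -/P -sum_nat_const; apply: leq_sum => y /imsetP[t tP ->].
rewrite sum1dep_card.
apply: leq_trans (HL t _) _.
  by move: tP; rewrite inE => /andP[/(subsetP sTY)].
apply: subset_leq_card; apply/subsetP=> x; rewrite !inE => /andP[xA /eqP E].
rewrite xA E eqxx andbT /=.
move: tP; rewrite inE => /andP[_ /eqP <-].
by rewrite (proj_sub sXY E).
Qed.


Lemma inv n (S : seq {set V}) : sorted (fun A B : {set V} => #|A| <= #|B|) S ->
  forall R T, T \in PARTITION n R S ->
  T \subset R /\ exists (A : {set V} -> {set tup V D}) (e : {set V} -> nat),
   forall U, U \in S -> [/\ T \subset A U, A U \subset R, 0 < e U,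
       forall t, t \in A U -> 2 ^ (e U).-1 <= cnt (A U) U t <= 2 ^ (e U) &
       forall W, W \in S -> #|U| < #|W| -> A W \subset A U].
Proof.
elim: S => [|U0 S' IH] /= srt R T.
  rewrite inE => /eqP ->; split=> //; exists (fun _ => R), (fun _ => 0) => U.
  by rewrite in_nil.
have srt' := path_sorted srt.
have trc : transitive (fun A B : {set V} => #|A| <= #|B|).
  by move=> a b c h1 h2; apply: leq_trans h1 h2.
have minU0 := order_path_min trc srt.
move/flattenP=> [s /mapP[i]]; rewrite mem_filter mem_iota => /andP[_ /andP[i1 _]] -> TP.
set R' := bucket R U0 i.
have sR'R : R' \subset R by apply/subsetP=> x; rewrite inE => /andP[].
have [sTR' [A' [e' HA]]] := IH srt' R' T TP.
split; first exact: subset_trans sR'R.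
exists (fun U => if U \in S' then A' U else R'), (fun U => if U \in S' then e' U else i).
move=> U; rewrite inE => HU.
case US: (U \in S').
  have [h1 h2 h3 h4 h5] := HA U US.
  split=> //; first exact: subset_trans sR'R.
  move=> W; rewrite inE; case WS: (W \in S'); first by move=> _; apply: h5.
  rewrite orbF => /eqP -> ltU.
  by move/allP: minU0 => /(_ U US); rewrite leqNgt ltU.
have UU0 : U = U0 by move: HU; rewrite US orbF => /eqP.
split=> //.
- move=> t tR'; rewrite UU0 /R' cnt_bucket // -degU_cnt.
  by move: tR'; rewrite inE => /andP[].
- move=> W; rewrite inE; case WS: (W \in S').
    by move=> _ _; have [_ ? _ _ _] := HA W WS.
  by rewrite orbF => /eqP ->; rewrite UU0 ltnn.
Qed.

Lemma size_part n (S : seq {set V}) R : size (PARTITION n R S) <= (up_log 2 n) ^ size S.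
Proof.
elim: S R => [|U0 S' IH] R /=; first by [].
rewrite expnS.
set l := [seq _ <- _ | _].
have : size l <= up_log 2 n by rewrite /l size_filter (leq_trans (count_size _ _)) // size_iota.
move=> hl; apply: (@leq_trans (size l * up_log 2 n ^ size S')); last by rewrite leq_mul2r hl orbT.
elim: l {hl} => [|j l IHl] //=.
by rewrite size_cat mulSn leq_add.
Qed.

End H.
Unset Implicit Arguments. Set Strict Implicit.
Lemma bigmax_real (F : realFieldType) (V D : finType) (T : {set tup V D}) (f : tup V D -> nat) (c : F) :
  (0 <= c)%R -> (forall s, s \in T -> ((f s)%:R <= c)%R) -> (((\max_(s in T) f s)%N)%:R <= c)%R.
Proof.
move=> c0 H; apply: (big_ind (fun x : nat => (x%:R <= c)%R)) => //.
by move=> x y hx hy; rewrite /maxn; case: ifP.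
Qed.

Theorem lemma4p3 (F : realFieldType) (V D : finType) (R : {set tup V D})
  (S : seq {set V}) :
  perm_eq S (enum [set: {set V}]) ->
  sorted (fun A B : {set V} => #|A| <= #|B|) S ->
  let n := #|R| in
  let Rs := PARTITION n R S in
  (#|[set T : {set tup V D} | T \in Rs]| <= (up_log 2 n) ^ #|[set: {set V}]|)%N /\
  (forall T, T \in Rs ->
     exists sigma : {set V} -> F,
       (forall Y, (0 <= sigma Y)%R) /\
       sigma set0 = (n%:R)%R /\ sigma [set: V] = 1%R /\
       satisfies T sigma).
Proof.
move=> hperm hsort n Rs.
have allS : forall U, U \in S by move=> U; rewrite (perm_mem hperm) mem_enum in_setT.
split.
  have -> : #|[set: {set V}]| = size S by rewrite (perm_size hperm) -cardE cardsT.
  apply: leq_trans (size_part n S R).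
  by rewrite cardsE; apply: card_size.
move=> T HT.
have n2 : 1 < n.
  rewrite ltnNge; apply/negP => n1; move: HT; rewrite /Rs.
  case E: S => [|U0 S']; first by move: (allS set0); rewrite E.
  have Hu : up_log 2 n = 0 by apply/eqP; rewrite up_log_eq0 n1 orbT.
  by rewrite /= Hu.
have [sTR [A [e HA]]] := inv hsort HT.
have ne : [set: V] != set0.
  apply/negP => /eqP E0; move: n2; rewrite ltnNge; apply/negP; apply/negPn.
  apply: leq_trans (subset_leq_card (subsetT R)) _.
  rewrite cardsT /tup card_ffun.
  have -> : #|V| = 0 by rewrite -cardsT E0 cards0.
  by [].
pose B X := if X == set0 then n else 2 ^ e X.
have Bpos : forall X, 0 < B X.
  by move=> X; rewrite /B; case: ifP => _; [apply: ltnW | rewrite expn_gt0].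
have HB : forall X s, X != setT -> s \in T -> cnt (A X) X s <= B X.
  move=> X s _ sT; have [h1 h2 h3 h4 h5] := HA X (allS X).
  rewrite /B; case: ifP => _.
    by apply: leq_trans (cnt_le _ _ _) (subset_leq_card h2).
  by case/andP: (h4 s (subsetP h1 _ sT)).
exists (fun X => if X == setT then 1%R else ((B X)%:R)%R).
have spos : forall X, (0 < (if X == setT then 1%R else ((B X)%:R)%R) :> F)%R.
  by move=> X; case: ifP => _; rewrite ?ltr01 // ltr0n.
split; first by move=> Y; apply: ltW.
split; first by rewrite eq_sym (negbTE ne) /B eqxx.
split; first by rewrite eqxx.
move=> X Y sXY; rewrite /deg.
apply: bigmax_real.
  by apply: divr_ge0; [apply: mulr_ge0 => //; apply: ltW | apply: ltW].
move=> s sT.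
case: (X =P Y) => [<-|nXY].
  rewrite mulfK; last by rewrite gt_eqF.
  rewrite (ler_nat F _ 2).
  apply: (@leq_trans 1) => //.
  rewrite /deg_at -(cards1 (proj X s)).
  apply: subset_leq_card; apply/subsetP=> y /imsetP[t]; rewrite !inE => /andP[_ /eqP E] ->.
  by rewrite E.
have nXT : X != setT.
  by apply/negP => /eqP XT; apply: nXY; apply/eqP; rewrite eqEsubset sXY XT subsetT.
have ltXY : #|X| < #|Y|.
  apply: proper_card; rewrite properEneq sXY andbT. by apply/negP => /eqP /nXY.
rewrite (negbTE nXT).
have [hX1 hX2 hX3 hX4 hX5] := HA X (allS X).
case: (Y =P setT) => [YT|nYT].
  rewrite YT. rewrite divr1 -natrM ler_nat.
  apply: (@leq_trans (B X)); last by rewrite leq_pmull.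
  apply: leq_trans (HB X s nXT sT).
  apply: leq_trans (cnt_sub _ _ hX1).
  by rewrite /deg_at; apply: leq_imset_card.
have nY0 : Y != set0.
  apply/negP => /eqP Y0; apply: nXY; move: sXY; rewrite Y0 subset0 => /eqP ->.
  by [].
have [hY1 hY2 hY3 hY4 hY5] := HA Y (allS Y).
have K := key s sXY hY1 (hX5 Y (allS Y) ltXY) (fun t ht => proj1 (andP (hY4 t ht))).
rewrite /B (negbTE nY0).
rewrite ler_pdivlMr ?ltr0n ?expn_gt0 // -!natrM ler_nat.
rewrite -(prednK hY3) expnS mulnCA leq_mul2l /=.
apply: leq_trans K _.
by apply: HB.
Qed.
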